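(* Let $m\ge2$ and $n\ge1$ be integers, let $a\in\mathbb{R}\setminus\mathbb{Z}^-$ (where $\mathbb{Z}^-=\{k\in\mathbb{Z}:k\le0\}$), and let $\mathcal{H}_n$ be the $m$-order $n$-dimensional generalized Hilbert tensor with entries $$\mathcal{H}_{i_1\cdots i_m}=\frac{1}{i_1+\cdots+i_m-m+a},\quad i_1,\dots,i_m\in\{1,\dots,n\}.$$ Let $$M(a)=\begin{cases}\frac1a, & a>0,\\ \frac{1}{\min\{a-[a],\,1+[a]-a\}}, & -m(n-1)<a<0,\\ \frac{1}{-m(n-1)-a}, & a<-m(n-1),\end{cases}$$ where $[a]$ denotes the largest integer not exceeding $a$. Then (i) if $m$ is even, $|\lambda|\le M(a)\,n^{m-1}$ for every $H$-eigenvalue $\lambda$ of $\mathcal{H}_n$; (ii) $|\mu|\le M(a)\,n^{\frac m2}$ for every $Z$-eigenvalue $\mu$ of $\mathcal{H}_n$.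
   Context: For an $m$-order $n$-dimensional real tensor $\mathcal{A}=(a_{i_1\cdots i_m})$ and $x\in\mathbb{C}^n$, $\mathcal{A}x^{m-1}$ is the vector with $i$-th component $\sum_{i_2,\dots,i_m=1}^n a_{i i_2\cdots i_m}x_{i_2}\cdots x_{i_m}$, and $x^{[m-1]}=(x_1^{m-1},\dots,x_n^{m-1})^\top$. A real number $\lambda$ is an $H$-eigenvalue of $\mathcal{A}$ if there is a nonzero $x\in\mathbb{R}^n$ with $\mathcal{A}x^{m-1}=\lambda x^{[m-1]}$. A real number $\mu$ is a $Z$-eigenvalue of $\mathcal{A}$ if there is a nonzero $x\in\mathbb{R}^n$ with $\mathcal{A}x^{m-1}=\mu\, x\,(x^\top x)^{\frac{m-2}{2}}$. *)

(* Defs.v *)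
From HB Require Import structures.
From mathcomp Require Import all_boot all_order all_algebra.
From mathcomp Require Import reals.
Set Implicit Arguments. Unset Strict Implicit. Unset Printing Implicit Defensive.
Import Order.TTheory GRing.Theory Num.Theory.
Local Open Scope ring_scope.

(* An m-order n-dimensional real tensor: entries indexed by
   (i_1,...,i_m), encoded as f : {ffun 'I_m -> 'I_n} (0-based indices,
   f k = i_{k+1} - 1). *)
Definition tensor (R : realType) (m n : nat) := {ffun 'I_m -> 'I_n} -> R.

(* (A x^{m-1})_i = sum_{i_2..i_m} a_{i i_2 .. i_m} x_{i_2} ... x_{i_m}:
   sum over index tuples whose first index (position 0) is i. *)
Definition tapply (R : realType) (m n : nat) (A : tensor R m n)
  (x : 'I_n -> R) (i : 'I_n) : R :=
  \sum_(f : {ffun 'I_m -> 'I_n} | [forall k : 'I_m, (val k == 0%N) ==> (f k == i)])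
     A f * \prod_(k : 'I_m | val k != 0%N) x (f k).

Definition nonzero_vec (R : realType) (n : nat) (x : 'I_n -> R) : Prop :=
  exists j : 'I_n, x j != 0.

Definition is_H_eigenvalue (R : realType) (m n : nat) (A : tensor R m n)
  (lambda : R) : Prop :=
  exists x : 'I_n -> R, nonzero_vec x /\
    forall i : 'I_n, tapply A x i = lambda * x i ^+ m.-1.

(* Z-eigenvalue: A x^{m-1} = mu x (x^T x)^{(m-2)/2} for some nonzero real x;
   (x^T x)^{(m-2)/2} is written (sqrt (x^T x))^(m-2). *)
Definition is_Z_eigenvalue (R : realType) (m n : nat) (A : tensor R m n)
  (mu : R) : Prop :=
  exists x : 'I_n -> R, nonzero_vec x /\
    forall i : 'I_n,
      tapply A x i = mu * x i * (Num.sqrt (\sum_(j < n) x j ^+ 2)) ^+ (m - 2).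

(* Generalized Hilbert tensor: H_{i_1..i_m} = 1/(i_1+...+i_m - m + a),
   with 1-based indices i_k = (f k) + 1. *)
Definition hilbert_tensor (R : realType) (m n : nat) (a : R) : tensor R m n :=
  fun f => 1 / ((\sum_(k < m) ((f k : nat).+1)%:R) - m%:R + a).

Definition Mconst (R : realType) (m n : nat) (a : R) : R :=
  if 0 < a then 1 / a
  else if (- (m * (n - 1))%:R < a) && (a < 0) then
    1 / Num.min (a - (Num.floor a)%:~R) (1 + (Num.floor a)%:~R - a)
  else 1 / (- (m * (n - 1))%:R - a).

(* Main.v *)
Require Import Defs.
From HB Require Import structures.
From mathcomp Require Import all_boot all_order all_algebra.
From mathcomp Require Import reals lra ring.
Import Order.TTheory GRing.Theory Num.Theory.
Local Open Scope ring_scope.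

Lemma key_sum (R : comPzRingType) (m' n : nat) (i : 'I_n) (g : 'I_n -> R) :
  \sum_(f : {ffun 'I_m'.+1 -> 'I_n} | [forall k : 'I_m'.+1, (val k == 0%N) ==> (f k == i)])
     \prod_(k : 'I_m'.+1 | val k != 0%N) g (f k) = (\sum_j g j) ^+ m'.
Proof.
pose F := fun (k : 'I_m'.+1) (j : 'I_n) => if val k == 0%N then ((j == i)%:R : R) else g j.
have -> : (\sum_j g j) ^+ m' = \prod_(k < m'.+1) \sum_j F k j.
  rewrite big_ord_recl /F /=.
  have -> : \sum_(j < n) ((j == i)%:R : R) = 1.
    rewrite (bigD1 i) //= eqxx big1 ?addr0 // => j /negbTE ->; by [].
  by rewrite mul1r -[in LHS](card_ord m') -prodr_const; apply: eq_bigl.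
rewrite bigA_distr_bigA /= big_mkcond /=; apply: eq_bigr => f _.
rewrite big_ord_recl /F /= big_mkcond big_ord_recl /=.
rewrite mul1r.
have -> : [forall k : 'I_m'.+1, (val k == 0%N) ==> (f k == i)] = (f ord0 == i).
  apply/forallP/idP => [H|/eqP H k]; first exact: (implyP (H ord0) isT); apply/implyP => /eqP k0.
  have -> : k = ord0 by apply: val_inj. by rewrite H.
by case: eqP => _; rewrite ?mul1r ?mul0r.
Qed.

Lemma inv_bound (R : realType) (d y : R) : 0 < d -> d <= `|y| -> `|1 / y| <= 1 / d.
Proof.
move=> d0 dy.
have y0 : 0 < `|y| by apply: lt_le_trans dy.
by rewrite !div1r normfV lef_pV2 ?posrE.
Qed.

Lemma entry_bound (R : realType) (m n : nat) (a : R)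
  (ha : ~ (exists k : int, k <= 0 /\ a = k%:~R)) (s : nat) :
  (s <= m * (n - 1))%N -> `|1 / (s%:R + a)| <= Mconst m n a.
Proof.
move=> hs.
have hsR : (s%:R : R) <= (m * (n - 1))%:R by rewrite ler_nat.
have s0 : (0 : R) <= s%:R by [].
set N := (m * (n - 1))%N in hs hsR *.
rewrite /Mconst -/N; case: ifP => a0.
  apply: inv_bound => //; rewrite ger0_norm; lra.
case: ifP => /andP.
  case=> h1 h2.
  set fl := Num.floor a.
  have f1 : fl%:~R <= a by apply: floor_le.
  have f2 : a < (fl + 1)%:~R by apply: floorD1_gt.
  rewrite rmorphD /= in f2.
  have f3 : fl%:~R != a.
    apply/eqP => e; apply: ha; exists fl; split => //.
    by rewrite /fl floor_le0; lra.
  have f4 : fl%:~R < a by rewrite lt_neqAle f3 f1.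
  apply: inv_bound.
    rewrite lt_min; apply/andP; split; lra.
  have sz : (s%:Z)%:~R = s%:R :> R by [].
  rewrite ge_min; case: (lerP 0 (s%:Z + fl)) => H.
    have := H; rewrite -(ler_int R) rmorphD /= sz => H'.
    apply/orP; left; rewrite ger0_norm; lra.
  have H1 : s%:Z + fl <= -1 by rewrite -ltzD1 addNr.
  have := H1; rewrite -(ler_int R) rmorphD /= sz => H'.
  apply/orP; right; rewrite ler0_norm; lra.
move=> hnot.
have an0 : a != 0.
  apply/eqP => e; apply: ha; exists 0; split => //; by rewrite e.
have aneg : a < 0 by rewrite lt_neqAle an0 /=; move/negbT: a0; rewrite -leNgt.
have aN : a <= - N%:R.
  rewrite leNgt; apply/negP => h; apply: hnot; split => //.
have aN' : a != - N%:R.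
  apply/eqP => e; apply: ha; exists (- N%:Z); split; first by rewrite oppr_le0.
  by rewrite e rmorphN.
have aN2 : a < - N%:R by rewrite lt_neqAle aN' aN.
apply: inv_bound; first lra.
rewrite ler0_norm; lra.
Qed.

Lemma sum_const_ord (R : realType) (n : nat) (c : R) : \sum_(j < n) c = c *+ n.
Proof. by rewrite -[in RHS](card_ord n) -sumr_const; apply: eq_bigl. Qed.

Lemma hilbert_entry (R : realType) (m n : nat) (a : R)
  (ha : ~ (exists k : int, k <= 0 /\ a = k%:~R)) (f : {ffun 'I_m -> 'I_n}) :
  `|hilbert_tensor a f| <= Mconst m n a.
Proof.
rewrite /hilbert_tensor.
have -> : \sum_(k < m) ((f k : nat).+1)%:R - m%:R = (\sum_(k < m) (f k : nat))%:R :> R.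
  rewrite -natr_sum.
  under eq_bigr do rewrite -addn1.
  by rewrite big_split /= big_const_ord iter_addn_0 mul1n natrD addrK.
apply: entry_bound => //.
have -> : (m * (n - 1) = \sum_(k < m) (n - 1))%N by rewrite big_const_ord iter_addn_0 mulnC.
apply: leq_sum => k _; rewrite subn1; move: (ltn_ord (f k)); case: (n) (f k : nat) => [|n0] v //.
Qed.

Lemma M_ge0 (R : realType) (m n : nat) (a : R)
  (ha : ~ (exists k : int, k <= 0 /\ a = k%:~R)) : 0 <= Mconst m n a.
Proof. exact: le_trans (normr_ge0 _) (@entry_bound R m n a ha 0%N (leq0n _)). Qed.

Lemma tapply_bound (R : realType) (m' n : nat) (a : R)
  (ha : ~ (exists k : int, k <= 0 /\ a = k%:~R)) (x : 'I_n -> R) (i : 'I_n) :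
  `|tapply (@hilbert_tensor R m'.+1 n a) x i| <= Mconst m'.+1 n a * (\sum_j `|x j|) ^+ m'.
Proof.
rewrite /tapply; apply: le_trans (ler_norm_sum _ _ _) _.
rewrite -(@key_sum _ m' n i) mulr_sumr; apply: ler_sum => f _.
rewrite normrM normr_prod; apply: ler_wpM2r; first by apply: prodr_ge0.
exact: hilbert_entry.
Qed.

Lemma cauchy_sum (R : realType) (n : nat) (y : 'I_n -> R) :
  (\sum_j y j) ^+ 2 <= n%:R * \sum_j y j ^+ 2.
Proof.
case: n y => [|n] y; first by rewrite !big_ord0 expr0n mul0r.
set S := \sum_j y j; set Q := \sum_j y j ^+ 2; set N := n.+1%:R : R.
have E : \sum_j (N * y j - S) ^+ 2 = N * (N * Q - S ^+ 2).
  rewrite (eq_bigr (fun j => N ^+ 2 * y j ^+ 2 - (2 * N * S) * y j + S ^+ 2)); last first.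
    by move=> j _; ring.
  rewrite big_split big_split /= sumrN -!mulr_sumr sum_const_ord -/S -/Q.
  rewrite -mulr_natl -/N; ring.
have : 0 <= N * (N * Q - S ^+ 2).
  by rewrite -E; apply: sumr_ge0 => j _; apply: sqr_ge0.
rewrite pmulr_rge0 ?ltr0Sn //; lra.
Qed.

Theorem theorem3p4 (R : realType) (m n : nat) (a : R)
  (hm : (2 <= m)%N) (hn : (1 <= n)%N)
  (ha : ~ (exists k : int, k <= 0 /\ a = k%:~R)) :
  (~~ odd m ->
     forall lambda : R, is_H_eigenvalue (@hilbert_tensor R m n a) lambda ->
       `|lambda| <= @Mconst R m n a * (n%:R) ^+ m.-1)
  /\
  (forall mu : R, is_Z_eigenvalue (@hilbert_tensor R m n a) mu ->
       `|mu| <= @Mconst R m n a * (Num.sqrt (n%:R)) ^+ m).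
Proof.
case: m hm => [|m'] // hm.
have M0 := @M_ge0 R m'.+1 n a ha.
set M := Mconst m'.+1 n a in M0 *.
split.
  move=> _ lam [x [[j0 xj0] Hx]].
  have [i Hi] : exists i, forall j, `|x j| <= `|x i|.
    by case: (@arg_maxP _ R _ j0 xpredT (fun j => `|x j|) isT) => i _ Hi; exists i => j; exact: Hi.
  have c0 : 0 < `|x i| by apply: lt_le_trans (Hi j0); rewrite normr_gt0.
  have S1 : \sum_j `|x j| <= n%:R * `|x i|.
    apply: le_trans (ler_sum _ (fun j _ => Hi j)) _.
    by rewrite sum_const_ord mulr_natl.
  have B := @tapply_bound R m' n a ha x i.
  rewrite Hx normrM normrX -/M in B.
  rewrite /= -(ler_pM2r (exprn_gt0 m' c0)); apply: le_trans B _.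
  rewrite -mulrA -exprMn ler_wpM2l //; apply: lerXn2r => //.
    by rewrite nnegrE; apply: sumr_ge0.
  by rewrite nnegrE mulr_ge0.
move=> mu [x [[j0 xj0] Hx]].
set Q := \sum_(j < n) x j ^+ 2 in Hx *.
set s := Num.sqrt Q in Hx *.
have Q0 : 0 < Q.
  rewrite /Q (bigD1 j0) //=; apply: (lt_le_trans (_ : 0 < x j0 ^+ 2)).
    by rewrite -real_normK ?num_real // exprn_gt0 // normr_gt0.
  by rewrite lerDl; apply: sumr_ge0 => j _; apply: sqr_ge0.
have s0 : 0 < s by rewrite sqrtr_gt0.
have sQ : s ^+ 2 = Q by rewrite sqr_sqrtr // ltW.
have Id : \sum_i x i * tapply (@hilbert_tensor R m'.+1 n a) x i = mu * s ^+ m'.+1.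
  under eq_bigr => i _ do rewrite Hx.
  set t := s ^+ (m'.+1 - 2).
  have -> : \sum_i x i * (mu * x i * t) = mu * t * Q.
    by rewrite /Q mulr_sumr; apply: eq_bigr => i _; ring.
  by rewrite -sQ -mulrA /t -exprD subnK.
set T := \sum_j `|x j|.
have T0 : 0 <= T by apply: sumr_ge0.
have B : `|mu| * s ^+ m'.+1 <= M * T ^+ m'.+1.
  have -> : `|mu| * s ^+ m'.+1 = `|mu * s ^+ m'.+1|.
    by rewrite normrM [`|s ^+ _|]ger0_norm // exprn_ge0 // ltW.
  rewrite -Id.
  apply: le_trans (ler_norm_sum _ _ _) _.
  apply: (le_trans (_ : _ <= \sum_i `|x i| * (M * T ^+ m'))).
    apply: ler_sum => i _; rewrite normrM; apply: ler_wpM2l => //.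
    exact: tapply_bound.
  by rewrite -mulr_suml -/T exprS mulrCA.
have CS : T <= Num.sqrt n%:R * s.
  have := @cauchy_sum R n (fun j => `|x j|).
  have -> : \sum_j `|x j| ^+ 2 = Q by apply: eq_bigr => j _; rewrite real_normK ?num_real.
  rewrite -/T => H.
  have : Num.sqrt (T ^+ 2) <= Num.sqrt (n%:R * Q) by rewrite ler_sqrt // mulr_ge0 // ltW.
  by rewrite sqrtr_sqr ger0_norm // sqrtrM.
rewrite -(ler_pM2r (exprn_gt0 m'.+1 s0)); apply: le_trans B _.
rewrite -mulrA -exprMn ler_wpM2l //; apply: lerXn2r => //.
by rewrite nnegrE mulr_ge0 ?sqrtr_ge0 ?ltW.
Qed.
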